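(* Let $n\ge 2$ be an integer, and let $G$ be a finite group with a subgroup $H=\langle x,y\mid x^{2^n}=e,\ y^2=e,\ x^y=x^{-1}\rangle\cong D_{2^{n+1}}$. Then $H$ is a perfect code of $G$ if and only if for each $a\in N_G(H)\setminus H$ with $a^2\in H$ all of the following hold: (a) $a^2\in\langle x\rangle$; (b) if $\langle x,a\rangle\cong C_{2^{n+1}}$, then $a^y=a^{-1}$; (c) if $\langle x,a\rangle\cong Q_{2^{n+1}}$, then $[a,y]\in\langle x^2\rangle$.
   Context: $D_{2m}$ is the dihedral group of order $2m$, $Q_{2^{m}}$ the generalized quaternion group of order $2^m$, $x^y=y^{-1}xy$, $[a,y]=a^{-1}y^{-1}ay$. For a group $G$ with identity $e$ and an inverse-closed subset $S\subseteq G\setminus\{e\}$, the Cayley graph $\mathrm{Cay}(G,S)$ has vertex set $G$ and edges $\{g,sg\}$ for $s\in S$, $g\in G$. A perfect code in a graph is an independent set $C$ of vertices such that every vertex outside $C$ is adjacent to exactly one vertex of $C$. A subgroup $H$ of $G$ is a perfect code of $G$ if some Cayley graph of $G$ admits $H$ as a perfect code. *)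

(* Defs.v *)
From mathcomp Require Import all_boot all_fingroup all_solvable.
Set Implicit Arguments. Unset Strict Implicit. Unset Printing Implicit Defensive.
Import GroupScope.
Local Open Scope group_scope.

Definition cay_adj (gT : finGroupType) (S : {set gT}) (u v : gT) : bool :=
  v * u^-1 \in S.

Definition cay_conn_set (gT : finGroupType) (G S : {set gT}) : Prop :=
  S \subset G :\ 1 /\ (forall s, s \in S -> s^-1 \in S).

Definition perfect_code_in_cay (gT : finGroupType) (G S C : {set gT}) : Prop :=
  [/\ C \subset G,
      (forall u v, u \in C -> v \in C -> ~~ cay_adj S u v) &
      (forall v, v \in G :\: C -> #|[set u in C | cay_adj S u v]| = 1%N)].

Definition perfect_code_of (gT : finGroupType) (G H : {set gT}) : Prop :=
  exists S : {set gT}, cay_conn_set G S /\ perfect_code_in_cay G S H.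

(* Main.v *)
Require Import Defs.
From mathcomp Require Import all_boot all_fingroup all_solvable.
Set Implicit Arguments. Unset Strict Implicit. Unset Printing Implicit Defensive.
Import GroupScope.
Local Open Scope group_scope.

Section PartA.
Variables (gT : finGroupType) (G H : {group gT}).
Hypothesis sHG : H \subset G.

Definition goodS (S : {set gT}) :=
  [/\ S \subset G :\: H, {in S, forall s, s^-1 \in S},
      {in S &, forall s t, t * s^-1 \in H -> t = s} &
      {in G :\: H, forall g, exists2 s, s \in S & g * s^-1 \in H}].

Lemma good_perfect S : goodS S -> perfect_code_of G H.
Proof.
case=> sS invS uniqS covS; exists S; split.
  split=> //; apply/subsetP=> s Ss; have:= subsetP sS s Ss.
  rewrite !inE => /andP[nH ->]; rewrite andbT.
  by apply: contraNneq nH => ->; apply: group1.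
split=> //.
- move=> u v Hu Hv; rewrite /cay_adj; apply/negP=> Sv.
  by have := subsetP sS _ Sv; rewrite inE groupM ?groupV.
- move=> v; rewrite inE => /andP[nHv Gv].
  have: v^-1 \in G :\: H by rewrite inE !groupV nHv Gv.
  case/covS=> s0 Ss0 Hvs.
  have Hs0v : s0 * v \in H by rewrite -[s0 * v]invgK invMg groupV.
  apply/eqP/cards1P; exists (s0 * v); apply/eqP; rewrite eqEsubset; apply/andP; split.
    apply/subsetP=> u; rewrite !inE => /andP[Hu Su].
    have St : u * v^-1 \in S by rewrite -[u * v^-1]invgK invMg invgK invS.
    have := uniqS _ _ Ss0 St.
    rewrite -mulgA -invMg groupM ?groupV // => /(_ isT) <-.
    by rewrite mulgKV.
  apply/subsetP=> u; rewrite !inE => /eqP ->; rewrite Hs0v /cay_adj.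
  by rewrite invMg mulgA mulgV mul1g invS.
Qed.

Lemma perfect_inv a : perfect_code_of G H -> a \in 'N_G(H) :\: H -> a ^+ 2 \in H ->
  exists2 h, h \in H & (h * a) ^+ 2 = 1.
Proof.
case=> S [[sS invS] [_ _ cnt]].
rewrite inE => /andP[nHa /setIP[Ga Na]] a2H.
have := cnt a; rewrite inE nHa Ga => /(_ isT) /eqP /cards1P[u0 defU].
have: u0 \in [set u in H | cay_adj S u a] by rewrite defU set11.
rewrite inE => /andP[Hu0 Su0]; rewrite /cay_adj in Su0.
have Na' : a^-1 \in 'N(H) by rewrite groupV.
have Hu' : a * u0^-1 * a \in H.
  have -> : a * u0^-1 * a = (u0^-1 ^ a^-1) * a ^+ 2.
    by rewrite /conjg invgK expgS expg1 !mulgA mulgKV.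
  by rewrite groupM // memJ_norm // groupV.
have : a * u0^-1 * a \in [set u in H | cay_adj S u a].
  rewrite inE Hu' /cay_adj !invMg invgK mulgA mulgA mulgV mul1g.
  by rewrite -[u0 * a^-1]invgK invMg invgK invS.
rewrite defU inE => /eqP e.
exists (a * u0^-1 * a^-1).
  have -> : a * u0^-1 * a^-1 = u0^-1 ^ a^-1 by rewrite /conjg invgK mulgA.
  by rewrite memJ_norm // groupV.
rewrite mulgKV expgS expg1.
by rewrite mulgA e mulgV.
Qed.


Definition dc g := [set h1 * g * h2 | h1 in H, h2 in H].
Definition covered (S : {set gT}) g := [exists s in S, g * s^-1 \in H].
Definition uncov S := [set g in G :\: H | ~~ covered S g].
Definition Inv (S : {set gT}) :=
  [/\ S \subset G :\: H, {in S, forall s, s^-1 \in S},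
      {in S &, forall s t, t * s^-1 \in H -> t = s} &
      {in S, forall s, s ^+ 2 = 1 -> s \in 'N(H)}].

Lemma mem_dc g h1 h2 : h1 \in H -> h2 \in H -> h1 * g * h2 \in dc g.
Proof. by move=> H1 H2; apply/imset2P; apply: (Imset2spec H1 H2). Qed.

Lemma dc_refl g : g \in dc g.
Proof. by have := mem_dc g (group1 H) (group1 H); rewrite mulg1 mul1g. Qed.

Lemma dc_sub g t : t \in dc g -> dc t \subset dc g.
Proof.
case/imset2P=> h1 h2 H1 H2 ->; apply/subsetP=> u /imset2P[k1 k2 K1 K2 ->].
by rewrite !mulgA -(mulgA (k1 * h1 * g) h2 k2) mem_dc ?groupM.
Qed.

Lemma dc_sym g t : t \in dc g -> g \in dc t.
Proof.
case/imset2P=> h1 h2 H1 H2 ->.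
have e : h1^-1 * (h1 * g * h2) * h2^-1 = g by rewrite !mulgA mulVg mul1g mulgK.
by rewrite -{1}e mem_dc ?groupV.
Qed.

Lemma dc_eq g t : t \in dc g -> dc t = dc g.
Proof.
by move=> tg; apply/eqP; rewrite eqEsubset dc_sub //= dc_sub // dc_sym.
Qed.

Lemma dc_inv g t : (t \in dc g^-1) = (t^-1 \in dc g).
Proof.
apply/idP/idP=> [/imset2P[h1 h2 H1 H2 ->]|/imset2P[h1 h2 H1 H2 e]].
  by rewrite !invMg invgK mulgA mem_dc ?groupV.
by rewrite -[t]invgK e !invMg mulgA mem_dc ?groupV.
Qed.

Lemma card_dc_inv g : #|dc g^-1| = #|dc g|.
Proof.
have -> : dc g^-1 = (dc g)^-1 by apply/setP=> t; rewrite inE dc_inv.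
by rewrite card_invg.
Qed.

Lemma rcoset_dc g : H :* g \subset dc g.
Proof.
apply/subsetP=> t; rewrite mem_rcoset => Ht.
by have := mem_dc g Ht (group1 H); rewrite mulg1 mulgKV.
Qed.

Lemma dc_norm g : g \in 'N(H) -> dc g = H :* g.
Proof.
move=> Ng; apply/eqP; rewrite eqEsubset rcoset_dc andbT.
apply/subsetP=> _ /imset2P[h1 h2 H1 H2 ->]; rewrite mem_rcoset.
have -> : h1 * g * h2 * g^-1 = h1 * h2 ^ g^-1 by rewrite /conjg invgK !mulgA.
by rewrite groupM // memJ_norm ?groupV.
Qed.

Lemma dc_G g : g \in G -> dc g \subset G.
Proof.
move=> Gg; apply/subsetP=> _ /imset2P[h1 h2 H1 H2 ->].
by rewrite !groupM // (subsetP sHG).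
Qed.

Lemma dc_notH g t : g \notin H -> t \in dc g -> t \notin H.
Proof.
move=> nHg /imset2P[h1 h2 H1 H2 ->]; apply: contra nHg => Ht.
have -> : g = h1^-1 * (h1 * g * h2) * h2^-1 by rewrite !mulgA mulVg mul1g mulgK.
by rewrite (groupM (groupM _ Ht)) ?groupV.
Qed.

Definition CT (T : {set gT}) := [set p.1 * p.2 | p in setX H T].

Lemma card_CT (S T : {set gT}) : Inv S -> T \subset S -> #|CT T| = (#|H| * #|T|)%N.
Proof.
case=> _ _ uniqS _ sTS; rewrite -cardsX; apply: card_in_imset.
move=> [h t] [h' t'] /setXP[Hh Tt] /setXP[Hh' Tt'] /= e.
have e2 : t' = t.
  apply: uniqS; rewrite ?(subsetP sTS) //.
  have -> : t' * t^-1 = h'^-1 * h by rewrite -(mulKg h' t') -e !mulgA mulgK.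
  by rewrite groupM ?groupV.
by move: e; rewrite e2 => /mulIg ->.
Qed.

Lemma CT_cov (S T : {set gT}) t : T \subset S -> t \in CT T -> covered S t.
Proof.
move=> sTS /imsetP[[h s] /setXP[Hh Ts] ->] /=.
by apply/exists_inP; exists s; rewrite ?(subsetP sTS) // mulgK.
Qed.

Lemma CT_dc (T : {set gT}) g : T \subset dc g -> CT T \subset dc g.
Proof.
move=> sT; apply/subsetP=> _ /imsetP[[h s] /setXP[Hh Ts] ->] /=.
have : s \in dc g by rewrite (subsetP sT).
case/imset2P=> h1 h2 H1 H2 ->; by rewrite !mulgA mem_dc ?groupM.
Qed.

Lemma even_inv (T : {set gT}) :
  {in T, forall t, t^-1 \in T /\ t^-1 != t} -> ~~ odd #|T|.
Proof.
have [k Hk] : exists k, #|T| <= k by exists #|T|.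
elim: k T Hk => [|k IH] T Hk hT.
  by move: Hk; rewrite leqn0 => /eqP ->.
have [->|[t Tt]] := set_0Vmem T; first by rewrite cards0.
have [Tti nti] := hT t Tt.
have Tti' : t^-1 \in T :\ t by rewrite !inE nti.
rewrite (cardsD1 t) Tt (cardsD1 t^-1 (T :\ t)) Tti' /=.
rewrite negbK; apply: IH.
  move: Hk; rewrite (cardsD1 t) Tt (cardsD1 t^-1 (T :\ t)) Tti' /=.
  by rewrite !add1n ltnS => /ltnW.
move=> u; rewrite !inE => /and3P[u1 u2 Tu].
have [Tui nui] := hT u Tu; rewrite nui Tui andbT; split=> //.
apply/andP; split.
  by apply: contra u2 => /eqP e; rewrite -[u]invgK e invgK.
by apply: contra u1 => /eqP e; rewrite -[u]invgK e.
Qed.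


Hypothesis hypInv : forall a, a \in 'N_G(H) :\: H -> a ^+ 2 \in H ->
  exists2 h, h \in H & (h * a) ^+ 2 = 1.
Hypothesis hypDC : forall g, g \in G -> #|dc g| = #|H| \/ (2 * #|H| %| #|dc g|)%N.

Lemma partner (S : {set gT}) g : Inv S -> g \in uncov S -> ~~ ((g \in 'N(H)) && (g ^+ 2 \in H)) ->
  exists2 g', g' \in uncov S & (g' \in dc g^-1) && (g' * g^-1 \notin H).
Proof.
move=> IS; have [sS invS uniqS invoS] := IS.
rewrite inE => /andP[]; rewrite inE => /andP[nHg Gg] ncov hyp.
have [/exists_inP[g' U' P']|none] :=
  boolP [exists g' in uncov S, (g' \in dc g^-1) && (g' * g^-1 \notin H)].
  by exists g'.
exfalso; move/exists_inPn: none => none.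
set D := dc g; set D' := dc g^-1.
set T := S :&: D; set T' := S :&: D'.
have sTS : T \subset S by apply: subsetIl.
have sT'S : T' \subset S by apply: subsetIl.
have cT := card_CT IS sTS; have cT' := card_CT IS sT'S.
have eTT : #|T'| = #|T|.
  have -> : T' = T^-1.
    apply/setP=> t; rewrite mem_invg !inE dc_inv.
    congr (_ && _); apply/idP/idP => St; last by rewrite -[t]invgK invS.
    by rewrite invS.
  by rewrite card_invg.
have H0 : 0 < #|H| by rewrite cardG_gt0.
have disj : forall T0 : {set gT}, T0 \subset S -> [disjoint CT T0 & H :* g].
  move=> T0 sT0; apply/pred0P => t /=; apply/negbTE/negP.
  case/andP=> /(CT_cov sT0)/exists_inP[s Ss Hts].
  rewrite mem_rcoset => Htg; apply: (negP ncov); apply/exists_inP; exists s => //.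
  have -> : g * s^-1 = (t * g^-1)^-1 * (t * s^-1) by rewrite invMg invgK mulgA mulgKV.
  by rewrite groupM ?groupV.
have sub1 : CT T :|: H :* g \subset D by rewrite subUset CT_dc ?subsetIr // rcoset_dc.
have lb : (#|H| * #|T| + #|H| <= #|D|)%N.
  have := subset_leq_card sub1.
  by rewrite cardsU (disjoint_setI0 (disj _ sTS)) cards0 subn0 cT card_rcoset.
have sub2 : D' \subset CT T' :|: H :* g.
  apply/subsetP=> t Dt; rewrite inE.
  have Gt : t \in G by rewrite (subsetP (dc_G (groupVr Gg))).
  have nHt : t \notin H by apply: dc_notH Dt; rewrite groupV.
  case: (boolP (covered S t)) => [/exists_inP[s Ss Hts]|nct].
    apply/orP; left; apply/imsetP; exists (t * s^-1, s); last by rewrite /= mulgKV.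
    have Ds : s \in D'.
      have e : (t * s^-1)^-1 * t * 1 = s by rewrite mulg1 invMg invgK mulgKV.
      by rewrite -e; apply: (subsetP (dc_sub Dt)); rewrite mem_dc ?groupV.
    by rewrite !inE Hts Ss Ds.
  apply/orP; right; rewrite mem_rcoset.
  have Ut : t \in uncov S by rewrite !inE nHt Gt nct.
  by move/(_ t Ut): none; rewrite Dt /= negbK.
case: (boolP (g^-1 \in D)) => gD.
  have eD : D' = D by apply: dc_eq.
  have ub : (#|D| <= #|H| * #|T| + #|H|)%N.
    rewrite -eD; apply: leq_trans (subset_leq_card sub2) _.
    by rewrite cardsU -eTT -cT' card_rcoset leq_subr.
  have eq : #|D| = (#|H| * #|T|.+1)%N.
    by rewrite mulnS addnC; apply/eqP; rewrite eqn_leq ub lb.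
  have nDH : #|D| != #|H|.
    apply/negP => /eqP eDH.
    have eR : H :* g = D.
      by apply/eqP; rewrite eqEcard rcoset_dc card_rcoset eDH leqnn.
    have Ng' : g^-1 \in 'N(H).
      rewrite inE; apply/subsetP=> _ /imsetP[h Hh ->].
      have : g * h \in D by have := mem_dc g (group1 H) Hh; rewrite mul1g.
      by rewrite -eR mem_rcoset /conjg invgK mulgA.
    apply: (negP hyp); rewrite -groupV Ng' /=.
    have : g^-1 \in H :* g by rewrite eR.
    by rewrite mem_rcoset expg2 -[g * g]invgK invMg groupV.
  case: (hypDC Gg) => [eDH|dvd]; first by rewrite eDH eqxx in nDH.
  have oT : odd #|T|.
    move: dvd; rewrite eq [(#|H| * _)%N]mulnC (dvdn_pmul2r H0) dvdn2 /=.
    by rewrite negbK.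
  move: oT; apply/negP; apply: even_inv => t; rewrite inE => /andP[St Dt]; split.
    by rewrite inE invS // -eD dc_inv invgK Dt.
  apply/negP => /eqP tt.
  have t2 : t ^+ 2 = 1 by rewrite expg2 -{1}tt mulVg.
  have Nt := invoS t St t2.
  have := dc_norm Nt; rewrite (dc_eq Dt) => eDt.
  by move: nDH; rewrite /D eDt card_rcoset eqxx.
have sub3 : D' \subset CT T'.
  apply/subsetP=> t Dt; have := subsetP sub2 t Dt; rewrite inE => /orP[//|].
  rewrite mem_rcoset => Htg; case/negP: gD.
  have : g \in D'.
    apply: (subsetP (dc_sub Dt)).
    have e : (t * g^-1)^-1 * t * 1 = g by rewrite mulg1 invMg invgK mulgKV.
    by rewrite -e mem_dc ?groupV.
  by rewrite /D' dc_inv.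
have := subset_leq_card sub3; rewrite cT' eTT /D' card_dc_inv => le.
have := leq_trans lb le.
by rewrite -{2}[(#|H| * #|T|)%N]addn0 leq_add2l leqNgt H0.
Qed.

Lemma cov_mono (S S' : {set gT}) t : S \subset S' -> covered S t -> covered S' t.
Proof.
by move=> sSS' /exists_inP[s Ss h]; apply/exists_inP; exists s; rewrite ?(subsetP sSS').
Qed.

Lemma shrink (S S' : {set gT}) g : S \subset S' -> g \in uncov S -> covered S' g ->
  #|uncov S'| < #|uncov S|.
Proof.
move=> sSS' gU cg; rewrite (cardsD1 g (uncov S)) gU add1n ltnS subset_leq_card //.
apply/subsetP=> t; rewrite !inE => /andP[Gt nct]; rewrite Gt /=.
apply/andP; split; first by apply: contraNneq nct => ->.
by apply: contra nct; apply: cov_mono.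
Qed.


Lemma step (S : {set gT}) g : Inv S -> g \in uncov S ->
  exists2 S', Inv S' & #|uncov S'| < #|uncov S|.
Proof.
move=> IS gU; have [sS invS uniqS invoS] := IS.
have := gU; rewrite !inE => /andP[/andP[nHg Gg] ncov].
have covg : forall t, t \in S -> g * t^-1 \in H -> False.
  by move=> t St h; case/negP: ncov; apply/exists_inP; exists t.
case: (boolP ((g \in 'N(H)) && (g ^+ 2 \in H))) => [/andP[Ng g2]|hyp].
  have gN : g \in 'N_G(H) :\: H by rewrite in_setD nHg in_setI Gg Ng.
  have [h Hh b2] := hypInv gN g2.
  set b := h * g.
  have Gh : h \in G := subsetP sHG h Hh.
  have Nh : h \in 'N(H) := subsetP (normG H) h Hh.
  have bi : b^-1 = b by apply: (mulgI b); rewrite mulgV -expg2 b2.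
  have nHb : b \notin H.
    apply: contra nHg => Hb; have -> : g = h^-1 * b by rewrite mulKg.
    by rewrite groupM ?groupV.
  exists (b |: S); last first.
    apply: (shrink (subsetUr _ _) gU); apply/exists_inP; exists b; rewrite ?setU11 //.
    by rewrite /b invMg mulgA mulgV mul1g groupV.
  split.
  - apply/subsetP=> t; case/setU1P=> [->|St]; last exact: (subsetP sS).
    by rewrite inE nHb groupM.
  - move=> t; case/setU1P=> [->|St]; first by rewrite bi setU11.
    by rewrite setU1r ?invS.
  - move=> u t; case/setU1P=> [->|Su]; case/setU1P=> [->|St] //.
    + move=> htb; exfalso; apply: (covg t St).
      have : t * g^-1 \in H.
        have -> : t * g^-1 = t * b^-1 * h by rewrite /b invMg !mulgA mulgKV.
        by rewrite groupM.
      by move=> Htg; rewrite -[g * t^-1]invgK invMg invgK groupV.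
    + move=> hbs; exfalso; apply: (covg u Su).
      have -> : g * u^-1 = h^-1 * (b * u^-1) by rewrite /b !mulgA mulVg mul1g.
      by rewrite groupM ?groupV.
    + exact: uniqS.
  - move=> t; case/setU1P=> [->|St]; first by move=> _; rewrite groupM.
    exact: invoS.
have [g' g'U /andP[Dg' ng']] := partner IS gU hyp.
case/imset2P: Dg' => h1 h2 H1 H2 eg'.
set s := h2^-1 * g.
have e1 : g' * s \in H by rewrite eg' /s !mulgA mulgK mulgKV.
have e2 : g * s^-1 \in H by rewrite /s invMg invgK mulgA mulgV mul1g.
have := g'U; rewrite !inE => /andP[/andP[nHg' Gg'] ncov'].
have covg' : forall t, t \in S -> g' * t^-1 \in H -> False.
  by move=> t St h; case/negP: ncov'; apply/exists_inP; exists t.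
have nHs : s \notin H.
  apply: contra nHg => Hs; have -> : g = h2 * s by rewrite /s mulKVg.
  by rewrite groupM.
have Gs : s \in G by rewrite /s groupM // groupV (subsetP sHG h2 H2).
clearbody s.
have f1 : forall t, t \in S -> t * s^-1 \in H -> False.
  move=> t St h; apply: (covg t St).
  have -> : g * t^-1 = (g * s^-1) * (t * s^-1)^-1 by rewrite invMg invgK mulgA mulgKV.
  by rewrite groupM ?groupV.
have f1' : forall t, t \in S -> s * t^-1 \in H -> False.
  by move=> t St h; apply: (f1 t St); rewrite -[t * s^-1]invgK invMg invgK groupV.
have f2 : forall t, t \in S -> t * s \in H -> False.
  move=> t St h; apply: (covg' t St).
  have -> : g' * t^-1 = (g' * s) * (t * s)^-1 by rewrite invMg mulgA mulgK.
  by rewrite groupM ?groupV.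
have f2' : forall t, t \in S -> s^-1 * t^-1 \in H -> False.
  by move=> t St h; apply: (f2 t St); rewrite -[t * s]invgK invMg groupV.
have f3 : s^-1 * s^-1 \in H -> False.
  move=> h; case/negP: ng'.
  have -> : g' * g^-1 = (g' * s) * (s^-1 * s^-1) * (g * s^-1)^-1.
    by rewrite invMg invgK !mulgA mulgK mulgKV.
  by apply: groupM; [apply: groupM | rewrite groupV].
have f3' : s * s \in H -> False.
  by move=> h; apply: f3; rewrite -invMg groupV.
exists (s |: (s^-1 |: S)); last first.
  apply: (shrink (subset_trans (subsetUr _ S) (subsetUr _ _)) gU).
  by apply/exists_inP; exists s; rewrite ?setU11.
split.
- apply/subsetP=> t; case/setU1P=> [->|/setU1P[->|St]].
  + by rewrite inE nHs Gs.
  + by rewrite inE !groupV nHs Gs.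
  + exact: (subsetP sS).
- move=> t; case/setU1P=> [->|/setU1P[->|St]].
  + by rewrite setU1r ?setU11.
  + by rewrite invgK setU11.
  + by rewrite !setU1r ?invS.
- move=> u t Su' St'.
  case/setU1P: Su' => [->|/setU1P[->|Su]]; case/setU1P: St' => [->|/setU1P[->|St]] // h;
  try (by rewrite ?invgK in h; first [case: (f3 h) | case: (f3' h) | case: (f1 _ St h)
      | case: (f2 _ St h) | case: (f1' _ Su h) | case: (f2' _ Su h)]).
  exact: uniqS.
- move=> t; case/setU1P=> [->|/setU1P[->|St]] h.
  + by case: f3'; rewrite -expg2 h group1.
  + by case: f3; rewrite -expg2 h group1.
  + exact: invoS.
Qed.

Lemma good_of_Inv (S : {set gT}) : Inv S -> uncov S = set0 -> goodS S.
Proof.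
case=> sS invS uniqS _ U0; split=> // g gGH.
have : g \notin uncov S by rewrite U0 inE.
by rewrite inE gGH /= negbK => /exists_inP[s Ss h]; exists s.
Qed.

Lemma exists_good : exists S, goodS S.
Proof.
suff: forall k (S : {set gT}), Inv S -> #|uncov S| <= k -> exists S, goodS S.
  apply=> //; split; [exact: sub0set | by move=> s; rewrite inE
    | by move=> s t; rewrite inE | by move=> s; rewrite inE].
elim=> [|k IH] S IS.
  by rewrite leqn0 cards_eq0 => /eqP U0; exists S; apply: good_of_Inv.
case: (set_0Vmem (uncov S)) => [U0|[g gU]] le; first by exists S; apply: good_of_Inv.
have [S' IS' lt] := step IS gU.
by apply: (IH S' IS'); rewrite -ltnS (leq_trans lt le).
Qed.

End PartA.

Lemma dc_card2 (gT : finGroupType) (H : {group gT}) m g : #|H| = (2 ^ m)%N ->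
  #|dc H g| = #|H| \/ (2 * #|H| %| #|dc H g|)%N.
Proof.
move=> cH.
have eD : dc H g = (H * (H :^ g^-1)) :* g.
  apply/setP=> t; rewrite mem_rcoset; apply/imset2P/mulsgP.
    case=> h1 h2 H1 H2 ->; exists h1 (h2 ^ g^-1) => //.
      by rewrite memJ_conjg.
    by rewrite conjgE invgK !mulgA.
  case=> h1 k H1 Hk e; rewrite mem_conjg invgK in Hk.
  apply: (Imset2spec H1 Hk).
  by rewrite conjgE !mulgA mulgK -e mulgKV.
have cM := mul_cardG H (H :^ g^-1)%G.
rewrite /= cardJg in cM.
have cD : #|dc H g| = #|H * H :^ g^-1| by rewrite eD card_rcoset.
have dv : (#|dc H g| %| 2 ^ (m + m))%N by rewrite cD expnD -cH cM dvdn_mulr.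
case/dvdn_pfactor: dv => // e _ ce.
have le : #|H| <= #|dc H g|.
  by rewrite -(card_rcoset H g) subset_leq_card // rcoset_dc.
rewrite cH ce leq_exp2l // in le *.
case: (ltngtP m e) => [lt|gt|->]; last by left.
  by right; rewrite -expnS dvdn_exp2l.
by move: le; rewrite leqNgt gt.
Qed.

Lemma conj_comm (gT : finGroupType) (u v : gT) : commute u v -> u ^ v = u.
Proof. by move=> c; rewrite conjgE c mulKg. Qed.

Lemma cyc_comm (gT : finGroupType) (x u v : gT) :
  u \in <[x]> -> v \in <[x]> -> commute u v.
Proof. by move=> Xu Xv; apply: (centsP (cycle_abelian x)). Qed.

Lemma K0_struct (gT : finGroupType) (x a : gT) :
  x ^ a \in <[x]> -> a ^+ 2 \in <[x]> -> a \notin <[x]> ->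
  <<[set x; a]>> = <[x]> :|: <[x]> :* a /\ #|<<[set x; a]>>| = (2 * #[x])%N.
Proof.
move=> xa a2 na.
have Na : a \in 'N(<[x]>) by rewrite inE -cycleJ cycle_subG.
have Na' : a^-1 \in 'N(<[x]>) by rewrite groupV.
have gS : group_set (<[x]> :|: <[x]> :* a).
  apply/group_setP; split; first by rewrite inE group1.
  move=> u v; rewrite !inE !mem_rcoset => /orP[Xu|Xua] /orP[Xv|Xva].
  - by rewrite groupM.
  - by apply/orP; right; rewrite -mulgA groupM.
  - apply/orP; right.
    have -> : u * v * a^-1 = (u * a^-1) * (v ^ a^-1) by rewrite /conjg invgK !mulgA mulgKV.
    by rewrite groupM // memJ_norm.
  - apply/orP; left.
    have -> : u * v = (u * a^-1) * ((v * a^-1) ^ a^-1) * a ^+ 2.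
      by rewrite /conjg invgK expg2 !mulgA mulgKV mulgKV mulgKV.
    by apply: groupM => //; apply: groupM => //; rewrite memJ_norm.
have eK : <<[set x; a]>> = <[x]> :|: <[x]> :* a.
  apply/eqP; rewrite eqEsubset; apply/andP; split.
    rewrite (gen_subG _ (Group gS)); apply/subsetP=> t; rewrite !inE.
    case/orP=> /eqP ->; first by rewrite cycle_id.
    by rewrite mem_rcoset mulgV group1 orbT.
  rewrite subUset cycle_subG mem_gen ?setU11 //=.
  apply/subsetP=> t; rewrite mem_rcoset => Xt.
  have -> : t = (t * a^-1) * a by rewrite mulgKV.
  rewrite groupM //; last by rewrite mem_gen // !inE eqxx orbT.
  by apply: (subsetP _ _ Xt); rewrite cycle_subG mem_gen // setU11.
split=> //; rewrite eK cardsU card_rcoset -orderE.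
have -> : <[x]> :&: <[x]> :* a = set0.
  apply/setP=> t; rewrite !inE mem_rcoset; apply/negP=> /andP[Xt Xta]; case/negP: na.
  have -> : a = (t * a^-1)^-1 * t by rewrite invMg invgK mulgKV.
  by rewrite groupM ?groupV.
by rewrite cards0 subn0 mul2n addnn.
Qed.

From mathcomp Require Import zify.

Section PartB.
Variables (gT : finGroupType) (n : nat) (x y : gT).
Hypotheses (n2 : 1 < n) (xo : x ^+ (2 ^ n) = 1) (y2 : y ^+ 2 = 1) (xy : x ^ y = x^-1)
  (isoD : <<[set x; y]>> \isog 'D_(2 ^ n.+1)).

Local Notation H := (<<[set x; y]>>).
Local Notation X := (<[x]>).

Lemma yi : y^-1 = y.
Proof. by apply: (mulgI y); rewrite mulgV -expg2 y2. Qed.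

Lemma inv_of2 (t : gT) : t ^+ 2 = 1 -> t^-1 = t.
Proof. by move=> t2; apply: (mulgI t); rewrite mulgV -expg2 t2. Qed.

Lemma Hfacts : [/\ #[x] = (2 ^ n)%N, y \notin X & H = X :|: X :* y].
Proof.
have n1 : 1 < n.+1 by rewrite ltnS ltnW.
have cH : #|H| = (2 ^ n.+1)%N by rewrite (card_isog isoD) (card_2dihedral n1).
have ox : #[x] %| 2 ^ n by rewrite order_dvdn xo.
have ny : y \notin X.
  apply/negP => Xy.
  have : H \subset X.
    by rewrite gen_subG; apply/subsetP => t; rewrite !inE => /orP[] /eqP ->; rewrite ?cycle_id.
  move/subset_leq_card; rewrite cH -orderE => le.
  have := leq_trans le (dvdn_leq (expn_gt0 2 n) ox).
  by rewrite expnS leqNgt (ltn_Pmull _ (expn_gt0 2 n)).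
have xyX : x ^ y \in X by rewrite xy groupV cycle_id.
have y2X : y ^+ 2 \in X by rewrite y2 group1.
have [eH cH'] := K0_struct xyX y2X ny.
split=> //; apply/eqP; by rewrite -(eqn_pmul2l (isT : (0 < 2)%N)) -cH' cH expnS.
Qed.

Lemma conjyX u : u \in X -> u ^ y = u^-1.
Proof. by case/cycleP=> i ->; rewrite conjXg xy expgVn. Qed.

Lemma XsubH : X \subset H.
Proof. by rewrite cycle_subG mem_gen // setU11. Qed.

Lemma yH : y \in H.
Proof. by rewrite mem_gen // !inE eqxx orbT. Qed.

Lemma HnX h : h \in H -> h \notin X -> h * y \in X.
Proof.
have [_ _ eH] := Hfacts.
by rewrite eH inE => /orP[-> //|]; rewrite mem_rcoset yi.
Qed.

Lemma invH h : h \in H -> h \notin X -> h ^+ 2 = 1.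
Proof.
move=> Hh nX; have Xu := HnX Hh nX.
have -> : h = (h * y) * y by rewrite -{2}yi mulgK.
have e : (h * y) * y * ((h * y) * y) = (h * y) * ((h * y) ^ y).
  by rewrite conjgE yi !mulgA.
by rewrite expg2 e conjyX // mulgV.
Qed.

Lemma mulHX u v : u \in H -> v \in H -> u \notin X -> v \notin X -> u * v \in X.
Proof.
move=> Hu Hv nu nv.
have vi := inv_of2 (invH Hv nv).
have -> : u * v = (u * y) * (v * y)^-1 by rewrite invMg mulgA mulgK vi.
by rewrite groupM ?groupV ?HnX.
Qed.

Lemma Nx a : a \in 'N(H) -> x ^ a \in X.
Proof.
move=> Na; have [ox _ _] := Hfacts.
have Hxa : x ^ a \in H by rewrite memJ_norm // (subsetP XsubH) ?cycle_id.
apply/negPn/negP => nX; have := invH Hxa nX; rewrite -conjXg => /eqP.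
rewrite conjg_eq1 -order_dvdn ox => /(dvdn_leq (isT : 0 < 2)).
have : 2 ^ 2 <= 2 ^ n by rewrite leq_exp2l.
lia.
Qed.

Lemma NX a : a \in 'N(H) -> a \in 'N(X).
Proof. by move=> Na; rewrite inE -cycleJ cycle_subG Nx. Qed.

Local Notation z := (x ^+ (2 ^ n.-1)).

Lemma oz : #[z] = 2.
Proof.
have [ox _ _] := Hfacts.
rewrite orderXdiv ox; last by rewrite dvdn_exp2l // leq_pred.
by rewrite -{1}(prednK (ltnW n2)) expnS mulnK // expn_gt0.
Qed.

Lemma zX2 : z \in <[x ^+ 2]>.
Proof.
have e : (2 ^ n.-1 = 2 * 2 ^ n.-2)%N by rewrite -expnS; congr (2 ^ _)%N; lia.
by rewrite e expgM mem_cycle.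
Qed.

Lemma sqX t : t \in X -> t ^+ 2 \in <[x ^+ 2]>.
Proof. by case/cycleP=> i ->; rewrite -expgM mulnC expgM mem_cycle. Qed.


Definition conds a := [/\ a ^+ 2 \in <[x]>,
         (cyclic <<[set x; a]>> /\ #|<<[set x; a]>>| = (2 ^ n.+1)%N -> a ^ y = a^-1) &
         (<<[set x; a]>> \isog 'Q_(2 ^ n.+1) -> [~ a, y] \in <[x ^+ 2]>)].

Lemma Kx a : x \in <<[set x; a]>>.
Proof. by rewrite mem_gen // setU11. Qed.

Lemma Ka a : a \in <<[set x; a]>>.
Proof. by rewrite mem_gen // !inE eqxx orbT. Qed.

Lemma Qfacts a : <<[set x; a]>> \isog 'Q_(2 ^ n.+1) ->
  (forall t, t \in <<[set x; a]>> -> #[t] = 2 -> t \in X) /\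
  (forall t, t \in <<[set x; a]>> -> t ^+ 2 \in <[x ^+ 2]>).
Proof.
move=> iso.
have n3 : 2 < n.+1 by rewrite ltnS.
have [[u v] gen _] := generators_quaternion n3 iso.
have [_ _ [_ _ inv1 _ mho] _ _] := quaternion_structure n3 gen iso.
have [oK Ku ou _] := gen.
have [ox _ _] := Hfacts.
have Kz : z \in <<[set x; a]>> by rewrite groupX ?Kx.
split.
  move=> t Kt ot; have e1 := inv1 t Kt ot; have e2 := inv1 _ Kz oz.
  by rewrite e1 -e2 mem_cycle.
move=> t Kt.
have p2K : 2.-group <<[set x; a]>> by rewrite /pgroup oK pnatX pnat_id.
have tM := Mho_p_elt 1 Kt (mem_p_elt p2K Kt).
have xM := Mho_p_elt 1 (Kx a) (mem_p_elt p2K (Kx a)).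
rewrite expn1 in tM xM.
have eM : 'Mho^1(<<[set x; a]>>) = <[x ^+ 2]>.
  apply/eqP; rewrite eq_sym eqEcard cycle_subG xM /=.
  rewrite (mho 1%N isT) -!orderE !orderXdiv ?ou ?ox //.
  1-2: by rewrite ?expn1 /= -(prednK (ltnW n2)) expnS dvdn_mulr.
by rewrite -eM.
Qed.

Lemma Cfacts a : cyclic <<[set x; a]>> ->
  (forall t, t \in <<[set x; a]>> -> #[t] = 2 -> t \in X).
Proof.
move=> cK t Kt ot.
have Kz : z \in <<[set x; a]>> by rewrite groupX ?Kx.
have : <[t]> == <[z]> :> {set gT}.
  by rewrite (eq_subG_cyclic cK) ?cycle_subG // -!orderE ot oz.
move/eqP => e; apply: (subsetP (cycleX x (2 ^ n.-1))).
by rewrite -e cycle_id.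
Qed.

Lemma B2 a h : a \in 'N(H) -> a \notin H -> h \in H -> (h * a) ^+ 2 = 1 -> conds a.
Proof.
move=> Na nHa Hh b2.
have Nh : h \in 'N(H) := subsetP (normG _) h Hh.
have Nb : h * a \in 'N(H) by rewrite groupM.
have NXb := NX Nb.
have bi : (h * a)^-1 = h * a := inv_of2 b2.
have nXa : a \notin X by apply: contra nHa; apply: (subsetP XsubH).
have ea : a = h^-1 * (h * a) by rewrite mulKg.
have a2X : a ^+ 2 \in X.
  have -> : a ^+ 2 = h^-1 * (h^-1 ^ (h * a)).
    rewrite -{1}(mulKg h a); move: bi; move: (h * a) => b bi'.
    by rewrite expg2 conjgE bi' !mulgA.
  case: (boolP (h^-1 \in X)) => hX.
    by rewrite groupM // memJ_norm.
  apply: mulHX => //; first by rewrite groupV.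
    by rewrite memJ_norm // groupV.
  by rewrite memJ_norm.
have xa := Nx Na.
have [eK cK] := K0_struct xa a2X nXa.
case: (boolP (h \in X)) => hX.
  have Kb : h * a \in <<[set x; a]>> by rewrite eK inE mem_rcoset mulgK hX orbT.
  have nXb : h * a \notin X.
    by apply: contra nXa => Xb; rewrite ea groupM ?groupV.
  have ob : #[h * a] = 2.
    apply: nt_prime_order => //; apply: contraNneq nXb => ->; exact: group1.
  split => //.
    by case=> cyc _; case/negP: nXb; apply: (Cfacts cyc Kb ob).
  by move=> iso; have [Q1 _] := Qfacts iso; case/negP: nXb; apply: Q1 Kb ob.
have [u Xu eh] : exists2 u, u \in X & h = u * y.
  by exists (h * y); [apply: HnX | rewrite -{2}yi mulgK].
have [v ea2 yb] : exists2 v, a = u * v & v = y * (h * a).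
  exists (u^-1 * a); first by rewrite mulKVg.
  by rewrite eh -(conjyX Xu) conjgE yi !mulgA.
have ev : v = u^-1 * a by apply: (mulgI u); rewrite mulKVg -ea2.
have Kv : v \in <<[set x; a]>>.
  by rewrite ev groupM ?Ka // groupV (subsetP _ _ Xu) // cycle_subG Kx.
have vy : v ^ y = v^-1.
  by rewrite yb conjgE invMg bi yi !mulgA -expg2 y2 mul1g.
have eay : a ^ y = u^-1 * v^-1 by rewrite ea2 conjMg conjyX // vy.
have Ku : u \in <<[set x; a]>> by rewrite (subsetP _ _ Xu) // cycle_subG Kx.
split => //.
  case=> cyc _.
  have c : commute u^-1 v^-1.
    by apply: (centsP (cyclic_abelian cyc)); rewrite groupV.
  by rewrite eay ea2 invMg c.
move=> iso; have [_ Q2] := Qfacts iso.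
have Nv : v \in 'N(X) by rewrite yb groupM // NX // (subsetP (normG _)) // yH.
have -> : [~ a, y] = ((u^-1) ^+ 2) ^ v * (v^-1) ^+ 2.
  rewrite /commg eay ea2 invMg conjgE !expg2 !mulgA mulgK.
  by [].
rewrite groupM ?Q2 ?groupV // conjXg sqX //.
by rewrite memJ_norm ?groupV.
Qed.


Lemma d2n : 2 %| 2 ^ n.
Proof. by rewrite -(prednK (ltnW n2)) expnS dvdn_mulr. Qed.

Lemma ox2 : #[x ^+ 2] = (2 ^ n.-1)%N.
Proof.
have [ox _ _] := Hfacts.
by rewrite orderXdiv ox ?d2n // -{1}(prednK (ltnW n2)) expnS mulKn.
Qed.

Lemma gen_odd m : odd m -> x ^+ 2 \in <[(x ^+ 2) ^+ m]>.
Proof.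
move=> om; have : generator <[x ^+ 2]> ((x ^+ 2) ^+ m).
  by rewrite generator_coprime ox2 coprime_pexpl ?coprime2n // -ltnS prednK // ltnW.
by rewrite /generator => /eqP <-; apply: cycle_id.
Qed.

Lemma ntz d : d \in X -> d != 1 -> z \in <[d]>.
Proof.
move=> Xd nd; have [ox _ _] := Hfacts.
have : #[d] %| 2 ^ n by rewrite -ox orderE order_dvdG.
case/dvdn_pfactor=> // m _ od.
have m0 : 0 < m.
  by case: m od => // od; move: nd; rewrite -order_eq1 od eqxx.
have ot : #[d ^+ (2 ^ m.-1)] = 2.
  rewrite orderXdiv od; last by rewrite dvdn_exp2l // leq_pred.
  by rewrite -{1}(prednK m0) expnS mulnK // expn_gt0.
have Xt : d ^+ (2 ^ m.-1) \in X by rewrite groupX.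
have : <[d ^+ (2 ^ m.-1)]> == <[z]> :> {set gT}.
  by rewrite (eq_subG_cyclic (cycle_cyclic x)) ?cycle_subG ?mem_cycle // -!orderE ot oz.
move/eqP => e; apply: (subsetP (cycleX d (2 ^ m.-1))).
by rewrite e cycle_id.
Qed.

Lemma B3 a : a \in 'N(H) -> a \notin H -> conds a -> exists2 h, h \in H & (h * a) ^+ 2 = 1.
Proof.
move=> Na nHa [a2X condC condQ].
have [ox ny eH] := Hfacts.
have xa := Nx Na.
have NXa := NX Na.
have NXa' : a^-1 \in 'N(X) by rewrite groupV.
have nXa : a \notin X by apply: contra nHa; apply: (subsetP XsubH).
have [eK cK] := K0_struct xa a2X nXa.
have conjA : forall u, u \in X -> u ^ a^-1 = u ^ a.
  move=> u Xu; have e : a = a^-1 * a ^+ 2 by rewrite expg2 mulKg.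
  rewrite {2}e conjgM (conj_comm (u := u ^ a^-1) (v := a ^+ 2)) //.
  by apply: (@cyc_comm _ x) => //; rewrite memJ_norm.
have sqa : forall g, (g * a) ^+ 2 = g * g ^ a^-1 * a ^+ 2.
  by move=> g; rewrite !expg2 conjgE invgK !mulgA mulgKV.
have yX : forall c, c \in X -> y * c = c^-1 * y.
  by move=> c Xc; rewrite -(conjyX Xc) conjgE yi -mulgA -(mulgA c) -expg2 y2 mulg1.
have I2 : forall u, u \in X ->
    (u * y * a) ^+ 2 = u * ((u ^ a)^-1 * y) * y ^ a^-1 * a ^+ 2.
  move=> u Xu; rewrite sqa conjMg conjA // -yX ?memJ_norm //.
  by rewrite !mulgA.
have wX : y * y ^ a^-1 \in X.
  apply: mulHX => //; first exact: yH.
    by rewrite memJ_norm ?yH // groupV.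
  by rewrite memJ_norm.
have cxa : commute x (x ^ a) by apply: (@cyc_comm _ x); rewrite ?cycle_id.
have pd : forall i, x ^+ i * (x ^+ i) ^ a = (x * x ^ a) ^+ i.
  by move=> i; rewrite conjXg (expgMn _ cxa).
have pe : forall i, x ^+ i * ((x ^+ i) ^ a)^-1 = (x * (x ^ a)^-1) ^+ i.
  by move=> i; rewrite conjXg -expVgn expgMn //; apply: commuteV.
have step1 : a ^+ 2 \in <[x * x ^ a]> -> exists2 h, h \in H & (h * a) ^+ 2 = 1.
  move/groupVr/cycleP=> [i ei]; exists (x ^+ i).
    by rewrite (subsetP XsubH) ?mem_cycle.
  by rewrite sqa conjA ?mem_cycle // pd -ei mulVg.
have step2 : y * y ^ a^-1 * a ^+ 2 \in <[x * (x ^ a)^-1]> ->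
    exists2 h, h \in H & (h * a) ^+ 2 = 1.
  move/groupVr/cycleP=> [i ei]; exists (x ^+ i * y).
    by rewrite groupM ?yH // (subsetP XsubH) ?mem_cycle.
  rewrite I2 ?mem_cycle //.
  have -> : x ^+ i * (((x ^+ i) ^ a)^-1 * y) * y ^ a^-1 * a ^+ 2 =
            (x ^+ i * ((x ^+ i) ^ a)^-1) * (y * y ^ a^-1 * a ^+ 2) by rewrite !mulgA.
  by rewrite pe -ei mulVg.
have [k ek] : exists k, x ^ a = x ^+ k by case/cycleP: xa => k ->; exists k.
have [j ej] : exists j, a ^+ 2 = x ^+ j by case/cycleP: a2X => j ->; exists j.
have xa2 : x ^ (a ^+ 2) = x by apply: conj_comm; apply: (@cyc_comm _ x); rewrite ?cycle_id.
have e1 : x ^ (a ^+ 2) = x ^+ (k * k) by rewrite expg2 conjgM ek conjXg ek -expgM.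
have ok : odd k.
  have : (k * k == 1 %[mod 2 ^ n]) by rewrite -ox -eq_expg_mod_order expg1 -e1 xa2.
  move/eqP/(congr1 (modn^~ 2)) => /=; rewrite !modn_dvdm ?d2n // !modn2 oddM.
  by case: (odd k).
set l := k./2.
have ekl : k = (l.*2).+1 by rewrite -[in LHS](odd_double_half k) ok.
have ed : x * x ^ a = (x ^+ 2) ^+ l.+1.
  by rewrite ek -expgS -expgM ekl mul2n doubleS.
have ee : x * (x ^ a)^-1 = ((x ^+ 2) ^+ l)^-1.
  by rewrite ek ekl expgSr invMg mulgA mulgV mul1g -muln2 mulnC expgM.
case: (boolP (odd l)) => ol.
  have xe : x ^+ 2 \in <[x * (x ^ a)^-1]> by rewrite ee cycleV gen_odd.
  have e2X : x * (x ^ a)^-1 \in <[x ^+ 2]> by rewrite ee groupV mem_cycle.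
  have eqe : <[x * (x ^ a)^-1]> = <[x ^+ 2]>.
    by apply/eqP; rewrite eqEsubset !cycle_subG xe e2X.
  have a2a : (a ^+ 2) ^ a = a ^+ 2.
    by apply: conj_comm; rewrite /commute -expgSr -expgS.
  have ej1 : (x * (x ^ a)^-1) ^+ j = 1.
    by rewrite -pe -ej a2a mulgV.
  have : (2 ^ n.-1 %| j)%N by rewrite -ox2 orderE -eqe -orderE order_dvdn ej1.
  case/dvdnP=> q eq.
  have ea2 : a ^+ 2 = z ^+ (odd q).
    by rewrite ej eq mulnC expgM -(expg_mod_order _ q) oz modn2.
  case: (boolP (odd q)) ea2 => oq ea2.
    case: (x ^ a =P x^-1) => [xai|nxai].
      have iso : <<[set x; a]>> \isog 'Q_(2 ^ n.+1).
        have n3 : 2 < n.+1 by rewrite ltnS.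
        apply/(isoGrpP _ (Grp_quaternion n3)); split.
          by rewrite card_quaternion // cK ox expnS.
        apply/existsP; exists (x, a); rewrite /= !xpair_eqE.
        have eJ : X <*> <[a]> = <<[set x; a]>>.
          apply/eqP; rewrite eqEsubset join_subG !cycle_subG Kx Ka /= gen_subG.
          apply/subsetP => t; rewrite !inE => /orP[] /eqP ->.
            by apply: (subsetP (joing_subl _ _)); apply: cycle_id.
          by apply: (subsetP (joing_subr _ _)); apply: cycle_id.
        by rewrite eJ xo ea2 expg1 xai !eqxx.
      have cQ := condQ iso.
      apply: step2; rewrite eqe groupM //; last by rewrite ea2 expg1 zX2.
      have -> : y * y ^ a^-1 = [~ a, y] ^ a^-1.
        by rewrite /commg !conjgE invgK yi !mulgA mulgV mul1g.
      rewrite memJ_norm //.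
      by rewrite groupV inE -cycleJ cycle_subG conjXg sqX // memJ_norm.
    apply: step1; rewrite ea2 expg1; apply: ntz; first exact: groupM (cycle_id x) xa.
    by apply/eqP => e; apply: nxai; apply: (mulgI x); rewrite e mulgV.
  by exists 1; rewrite ?group1 // mul1g ea2.
have xd : x ^+ 2 \in <[x * x ^ a]> by rewrite ed gen_odd.
case: (boolP (odd j)) => oj.
  have xA : x \in <[a]>.
    have : generator <[x]> (x ^+ j) by rewrite generator_coprime ox coprime_pexpl ?coprime2n // ltnW.
    have sj : <[x ^+ j]> \subset <[a]> by rewrite cycle_subG -ej mem_cycle.
    by rewrite /generator => /eqP e; apply: (subsetP sj); rewrite -e cycle_id.
  have eKa : <<[set x; a]>> = <[a]>.
    apply/eqP; rewrite eqEsubset cycle_subG Ka andbT gen_subG.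
    by apply/subsetP=> t; rewrite !inE => /orP[] /eqP ->; rewrite ?cycle_id.
  have cycK : cyclic <<[set x; a]>> by rewrite eKa cycle_cyclic.
  have cardK : #|<<[set x; a]>>| = (2 ^ n.+1)%N by rewrite cK ox expnS.
  have ay := condC (conj cycK cardK).
  exists y; rewrite ?yH //.
  by rewrite expg2 -{1}yi mulgA -(mulgA y^-1 a y) -conjgE ay mulVg.
have s2 : <[x ^+ 2]> \subset <[x * x ^ a]> by rewrite cycle_subG.
apply: step1; apply: (subsetP s2).
have ejj : j = (j./2 * 2)%N.
  by rewrite muln2 -[in LHS](odd_double_half j) (negbTE oj) add0n.
by rewrite ej ejj mulnC expgM mem_cycle.
Qed.

End PartB.

Unset Implicit Arguments.
Set Strict Implicit.

Theorem corollary3p5 (gT : finGroupType) (G : {group gT}) (n : nat) (x y : gT) :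
  (2 <= n)%N ->
  x \in G -> y \in G ->
  x ^+ (2 ^ n) = 1 -> y ^+ 2 = 1 -> x ^ y = x^-1 ->
  <<[set x; y]>> \isog 'D_(2 ^ n.+1) ->
  perfect_code_of G <<[set x; y]>> <->
  (forall a, a \in 'N_G(<<[set x; y]>>) :\: <<[set x; y]>> ->
     a ^+ 2 \in <<[set x; y]>> ->
     [/\ a ^+ 2 \in <[x]>,
         (cyclic <<[set x; a]>> /\ #|<<[set x; a]>>| = (2 ^ n.+1)%N -> a ^ y = a^-1) &
         (<<[set x; a]>> \isog 'Q_(2 ^ n.+1) -> [~ a, y] \in <[x ^+ 2]>)]).
Proof.
move=> n2 Gx Gy xo y2 xy isoD.
have sHG : <<[set x; y]>> \subset G.
  by rewrite gen_subG; apply/subsetP=> t; rewrite !inE => /orP[] /eqP ->.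
have n1 : 1 < n.+1 by rewrite ltnS ltnW.
have cH : #|<<[set x; y]>>| = (2 ^ n.+1)%N.
  by rewrite (card_isog isoD) (card_2dihedral n1).
split.
  move=> pc a aN a2.
  have [h Hh ha] := perfect_inv pc aN a2.
  move: aN; rewrite in_setD => /andP[nHa /setIP[Ga Na]].
  exact: (B2 n2 xo y2 xy isoD Na nHa Hh ha).
move=> hyp.
have hypInv : forall a, a \in 'N_G(<<[set x; y]>>) :\: <<[set x; y]>> ->
    a ^+ 2 \in <<[set x; y]>> -> exists2 h, h \in <<[set x; y]>> & (h * a) ^+ 2 = 1.
  move=> a aN a2; have cs := hyp a aN a2.
  move: aN; rewrite in_setD => /andP[nHa /setIP[Ga Na]].
  exact: (B3 n2 xo y2 xy isoD Na nHa cs).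
have hypDC : forall g, g \in G -> #|dc <<[set x; y]>> g| = #|<<[set x; y]>>| \/
    (2 * #|<<[set x; y]>>| %| #|dc <<[set x; y]>> g|)%N.
  by move=> g _; apply: (dc_card2 _ cH).
have [S gS] := exists_good sHG hypInv hypDC.
exact: (@good_perfect gT G _ sHG S gS).
Qed.
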